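(* The robustness of activity $\mathsf A_r$ satisfies: (1) $\mathsf A_r(\rho)\in[0,d-1]$ for all $\rho\in\mathsf{St}(S)$, and the value $d-1$ is attained (e.g. by $\rho=|d\rangle\langle d|$); (2) $\mathsf A_r(\rho)=0$ if and only if $\rho\in\mathsf P(S)$; (3) $\mathsf A_r(p\rho_1+(1-p)\rho_2)\le p\,\mathsf A_r(\rho_1)+(1-p)\,\mathsf A_r(\rho_2)$ for all $p\in[0,1]$ and states $\rho_1,\rho_2$; (4) $\mathsf A_r(\mathcal C(\rho))\le\mathsf A_r(\rho)$ for every passivity-preserving channel $\mathcal C$ and every state $\rho$.
   Context: $S$ is a $d$-dimensional quantum system with non-degenerate Hamiltonian $H=\sum_i E_i|i\rangle\langle i|$, $E_1<\dots<E_d$. $\mathsf{St}(S)$ is the set of density matrices; $\mathsf P(S)$ is the set of passive states, i.e. states $\sum_i p_i|i\rangle\langle i|$ with $p_1\ge\dots\ge p_d$. The robustness of activity is $\mathsf A_r(\rho)=\min\{t\ge0:\ \exists\sigma\in\mathsf{St}(S)\text{ with }(\rho+t\sigma)/(1+t)\in\mathsf P(S)\}$. A channel $\mathcal C$ is passivity-preserving if $\mathcal C(\mathsf P(S))\subseteq\mathsf P(S)$. *)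

(* Defs.v *)
From HB Require Import structures.
From mathcomp Require Import all_boot all_order all_algebra.
From mathcomp Require Import complex mxtens.
From mathcomp Require Import classical_sets reals.

Set Implicit Arguments.
Unset Strict Implicit.
Unset Printing Implicit Defensive.

Import Order.TTheory GRing.Theory Num.Theory.
Local Open Scope ring_scope.
Local Open Scope complex_scope.

Section Quantum.
Variable R : realType.
Local Notation C := (R[i]).

Definition adjmx m n (A : 'M[C]_(m, n)) : 'M[C]_(n, m) := (map_mx Num.conj A)^T.

(* positive semidefinite: Hermitian and <v, A v> >= 0 for all v
   (in the numClosedFieldType C, [0 <= z] means z is real and nonnegative) *)
Definition psd n (A : 'M[C]_n) : Prop :=
  adjmx A = A /\ forall v : 'cV[C]_n, 0 <= (adjmx v *m A *m v) 0 0.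

Definition is_state d (rho : 'M[C]_d) : Prop := psd rho /\ \tr rho = 1.

(* Passive states P(S), written in the energy eigenbasis |0>,...,|d-1>
   (ordered by strictly increasing energy):
   rho = sum_i p_i |i><i| with p_0 >= p_1 >= ... *)
Definition is_passive d (rho : 'M[C]_d) : Prop :=
  is_state rho /\
  exists p : 'I_d -> R,
    rho = diag_mx (\row_i (p i)%:C) /\
    forall i j : 'I_d, (i <= j)%N -> p j <= p i.

Definition ra_feasible d (rho : 'M[C]_d) (t : R) : Prop :=
  0 <= t /\ exists sigma : 'M[C]_d,
    is_state sigma /\ is_passive ((1 + t)^-1%:C *: (rho + t%:C *: sigma)).

(* robustness of activity A_r(rho) = min { t >= 0 | ... }, rendered as the
   infimum of the feasible set (the minimum when it is attained) *)
Definition robustness_activity d (rho : 'M[C]_d) : R :=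
  inf [set t | ra_feasible rho t].

Definition mxblk k d (X : 'M[C]_(k * d)) (a b : 'I_k) : 'M[C]_d :=
  \matrix_(p, q) X (mxtens_index (a, p)) (mxtens_index (b, q)).

Definition ampliation k d (Phi : 'M[C]_d -> 'M[C]_d) (X : 'M[C]_(k * d))
  : 'M[C]_(k * d) :=
  \sum_(a < k) \sum_(b < k) (delta_mx a b *t Phi (mxblk X a b)).

Definition completely_positive d (Phi : 'M[C]_d -> 'M[C]_d) : Prop :=
  forall k (X : 'M[C]_(k * d)), psd X -> psd (ampliation Phi X).

Definition is_channel d (Phi : {linear 'M[C]_d -> 'M[C]_d}) : Prop :=
  completely_positive Phi /\ forall X, \tr (Phi X) = \tr X.

Definition passivity_preserving d (Phi : 'M[C]_d -> 'M[C]_d) : Prop :=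
  forall rho, is_passive rho -> is_passive (Phi rho).

End Quantum.

(* Main.v *)
Require Import Defs.
From HB Require Import structures.
From mathcomp Require Import all_boot all_order all_algebra.
From mathcomp Require Import complex mxtens.
From mathcomp Require Import classical_sets reals.
From mathcomp Require Import ring lra.
Set Implicit Arguments.
Unset Strict Implicit.
Unset Printing Implicit Defensive.
Import Order.TTheory GRing.Theory Num.Theory.
Local Open Scope ring_scope.
Local Open Scope complex_scope.
Section S0.
Variable R : realType.
Local Notation C := (R[i]).
Lemma conjN (x : C) : Num.conj (- x) = - Num.conj x.
Proof. exact: rmorphN. Qed.
Lemma conjM (x y : C) : Num.conj (x * y) = Num.conj x * Num.conj y.
Proof. exact: rmorphM. Qed.
End S0.

Section Lems.
Variable R : realType.
Local Notation C := (R[i]).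

Definition qf d (A : 'M[C]_d) (x y : 'cV[C]_d) : C := (adjmx x *m A *m y) 0 0.

Lemma adjmxE m n (A : 'M[C]_(m,n)) i j : adjmx A i j = (A j i)^*.
Proof. by rewrite /adjmx !mxE. Qed.

Lemma adjmxD m n (A B : 'M[C]_(m,n)) : adjmx (A + B) = adjmx A + adjmx B.
Proof. by apply/matrixP => i j; rewrite !(adjmxE, mxE) rmorphD. Qed.

Lemma adjmxN m n (A : 'M[C]_(m,n)) : adjmx (- A) = - adjmx A.
Proof. by apply/matrixP => i j; rewrite !(adjmxE, mxE) rmorphN. Qed.

Lemma adjmxB m n (A B : 'M[C]_(m,n)) : adjmx (A - B) = adjmx A - adjmx B.
Proof. by rewrite adjmxD adjmxN. Qed.

Lemma adjmxZ m n a (A : 'M[C]_(m,n)) : adjmx (a *: A) = a^* *: adjmx A.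
Proof. by apply/matrixP => i j; rewrite !(adjmxE, mxE) rmorphM. Qed.

Lemma adjmx_delta m n (i : 'I_m) (j : 'I_n) :
  adjmx (delta_mx i j : 'M[C]_(m,n)) = delta_mx j i.
Proof. by apply/matrixP => a b; rewrite !(adjmxE, mxE) conjc_nat andbC. Qed.

Lemma adjmx1 d : adjmx (1%:M : 'M[C]_d) = 1%:M.
Proof. by apply/matrixP => a b; rewrite !(adjmxE, mxE) rmorph_nat eq_sym. Qed.

Lemma qf_delta d (A : 'M[C]_d) (i j : 'I_d) : qf A (delta_mx i 0) (delta_mx j 0) = A i j.
Proof. by rewrite /qf adjmx_delta -rowE -colE !mxE. Qed.

Lemma qfDl d (A : 'M[C]_d) x y z : qf A (x + y) z = qf A x z + qf A y z.
Proof. by rewrite /qf adjmxD !mulmxDl mxE. Qed.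
Lemma qfDr d (A : 'M[C]_d) x y z : qf A z (x + y) = qf A z x + qf A z y.
Proof. by rewrite /qf !mulmxDr mxE. Qed.
Lemma qfZl d (A : 'M[C]_d) a x z : qf A (a *: x) z = a^* * qf A x z.
Proof. by rewrite /qf adjmxZ -!scalemxAl mxE. Qed.
Lemma qfZr d (A : 'M[C]_d) a x z : qf A z (a *: x) = a * qf A z x.
Proof. by rewrite /qf -!scalemxAr mxE. Qed.
Lemma qfAD d (A B : 'M[C]_d) x y : qf (A + B) x y = qf A x y + qf B x y.
Proof. by rewrite /qf mulmxDr mulmxDl mxE. Qed.
Lemma qfAN d (A : 'M[C]_d) x y : qf (- A) x y = - qf A x y.
Proof. by rewrite /qf mulmxN mulNmx mxE. Qed.
Lemma qfAZ d (A : 'M[C]_d) a x y : qf (a *: A) x y = a * qf A x y.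
Proof. by rewrite /qf -scalemxAr -scalemxAl mxE. Qed.

Lemma qfNl d (A : 'M[C]_d) x z : qf A (- x) z = - qf A x z.
Proof. by rewrite /qf adjmxN !mulNmx mxE. Qed.
Lemma qfNr d (A : 'M[C]_d) x z : qf A z (- x) = - qf A z x.
Proof. by rewrite /qf !mulmxN mxE. Qed.

Lemma qf_twoB d (A : 'M[C]_d) (i j : 'I_d) (a b : C) :
  let w := a *: delta_mx i 0 - b *: delta_mx j 0 in
  qf A w w = a^* * a * A i i - a^* * b * A i j - b^* * a * A j i + b^* * b * A j j.
Proof.
by rewrite /= !(qfDl, qfDr, qfNl, qfNr, qfZl, qfZr, qf_delta); ring.
Qed.

Lemma qf_two d (A : 'M[C]_d) (i j : 'I_d) (a b : C) :
  let w := a *: delta_mx i 0 + b *: delta_mx j 0 in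
  qf A w w = a^* * a * A i i + a^* * b * A i j + b^* * a * A j i + b^* * b * A j j.
Proof.
by rewrite /= !(qfDl, qfDr, qfZl, qfZr, qf_delta); ring.
Qed.

Lemma qfE d (A : 'M[C]_d) v :
  qf A v v = \sum_i \sum_j (v i 0)^* * A i j * v j 0.
Proof.
rewrite /qf mxE exchange_big /=; apply: eq_bigr => j _.
rewrite mxE mulr_suml; apply: eq_bigr => i _; by rewrite adjmxE.
Qed.

Lemma qf1 d (v : 'cV[C]_d) : qf 1%:M v v = \sum_i (v i 0)^* * v i 0.
Proof. by rewrite /qf mulmx1 mxE; apply: eq_bigr => i _; rewrite adjmxE. Qed.

Lemma psd_diag d (A : 'M[C]_d) (i : 'I_d) : psd A -> 0 <= A i i.
Proof. by case=> _ /(_ (delta_mx i 0)); rewrite -/(qf _ _ _) qf_delta. Qed.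

End Lems.

Section Lems2.
Variable R : realType.
Local Notation C := (R[i]).

Lemma herm_entry d (A : 'M[C]_d) i j : adjmx A = A -> A j i = (A i j)^*.
Proof. by move=> h; rewrite -{1}h adjmxE. Qed.

Lemma state_trace d (A : 'M[C]_d) : is_state A -> \sum_i A i i = 1.
Proof. by case=> _ <-. Qed.

Lemma state_diag_le1 d (A : 'M[C]_d) i : is_state A -> A i i <= 1.
Proof.
move=> hs; rewrite -(state_trace hs) (bigD1 i) //= lerDl.
by apply: sumr_ge0 => k _; apply: psd_diag; case: hs.
Qed.

Lemma state_le_id d (A : 'M[C]_d) : is_state A -> psd (1%:M - A).
Proof.
move=> hs; have [[hA hq] htr] := hs.
split; first by rewrite adjmxB adjmx1 hA.
move=> v; rewrite -/(qf _ _ _) qfAD qfAN qf1.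
set N := \sum_i _.
pose w (i j : 'I_d) := (v j 0)^* *: (delta_mx i 0 : 'cV[C]_d) - (v i 0)^* *: delta_mx j 0.
have key : 2 * (N - qf A v v) = \sum_i \sum_j qf A (w i j) (w i j).
  have e1 : \sum_i \sum_j qf A (w i j) (w i j) =
     \sum_i ((\sum_j (v j 0 * (v j 0)^* * A i i)) - (\sum_j ((v i 0)^* * A i j * v j 0))
        - (\sum_j ((v j 0)^* * A j i * v i 0)) + (\sum_j (v i 0 * (v i 0)^* * A j j))).
    apply: eq_bigr => i _; rewrite -!sumrB -big_split /=; apply: eq_bigr => j _.
    rewrite qf_twoB !conjCK; ring.
  rewrite e1 big_split /= !sumrB /=.
  rewrite -[X in _ - X - _ + _]qfE.
  rewrite [X in _ - _ - X + _]exchange_big /= -qfE.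
  have hN1 : \sum_i \sum_j (v j 0 * (v j 0)^* * A i i) = N * \sum_i A i i.
    rewrite mulr_sumr; apply: eq_bigr => i _; rewrite /N mulr_suml; apply: eq_bigr => j _.
    ring.
  have hN2 : \sum_i \sum_j (v i 0 * (v i 0)^* * A j j) = N * \sum_i A i i.
    rewrite exchange_big /= -hN1; apply: eq_bigr => i _; done.
  rewrite hN1 hN2 (state_trace hs) mulr1; ring.
have h2 : 0 <= 2 * (N - qf A v v).
  by rewrite key; apply: sumr_ge0 => i _; apply: sumr_ge0 => j _; apply: hq.
by move: h2; rewrite pmulr_rge0 // ltr0n.
Qed.

Lemma state_offdiag d (A : 'M[C]_d) i j : is_state A -> i != j ->
  A i j * (A i j)^* <= 1.
Proof.
move=> hs hij; have [[hA hq] htr] := hs.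
have := hq (1 *: delta_mx i 0 - (A j i) *: delta_mx j 0).
rewrite -/(qf _ _ _) qf_twoB (herm_entry i j hA) conjCK rmorph1.
set s := A i j * (A i j)^*.
have hs0 : 0 <= s by apply: mulcJ_ge0.
have hii := state_diag_le1 i hs; have hjj := state_diag_le1 j hs.
have hjj0 : 0 <= A j j by apply: psd_diag; case: hs.
have -> : 1 * 1 * A i i - 1 * (A i j)^* * A i j - A i j * 1 * (A i j)^* +
   A i j * (A i j)^* * A j j = A i i - 2 * s + s * A j j by rewrite /s; ring.
move=> h.
have h1 : s * A j j <= s by rewrite ler_piMr.
have : 0 <= 1 - s.
  apply: (le_trans h).
  have -> : 1 - s = 1 - 2 * s + s by ring.
  by rewrite lerD // lerD2r.
by rewrite subr_ge0.
Qed.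

End Lems2.

Section Lems3.
Variable R : realType.
Local Notation C := (R[i]).

Lemma conjR (x : R) : Num.conj (x%:C) = x%:C :> C.
Proof. exact: conjc_real. Qed.

Lemma ge0_realC (z : C) : 0 <= z -> (complex.Re z)%:C = z :> C.
Proof. by move=> h; apply: RRe_real; apply: ger0_real. Qed.

Lemma psd_scale d (A : 'M[C]_d) (a : R) : 0 <= a -> psd A -> psd (a%:C *: A).
Proof.
move=> ha [hA hq]; split; first by rewrite adjmxZ conjR hA.
by move=> v; rewrite -/(qf _ _ _) qfAZ; apply: mulr_ge0; [rewrite ler0c | apply: hq].
Qed.

Lemma psd_add d (A B : 'M[C]_d) : psd A -> psd B -> psd (A + B).
Proof.
move=> [hA qA] [hB qB]; split; first by rewrite adjmxD hA hB.
by move=> v; rewrite -/(qf _ _ _) qfAD; apply: addr_ge0; [apply: qA | apply: qB].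
Qed.

Lemma state_conv d (A B : 'M[C]_d) (a b : R) : 0 <= a -> 0 <= b -> a + b = 1 ->
  is_state A -> is_state B -> is_state (a%:C *: A + b%:C *: B).
Proof.
move=> ha hb hab [pA tA] [pB tB]; split.
  by apply: psd_add; apply: psd_scale.
by rewrite mxtraceD !mxtraceZ tA tB !mulr1 -rmorphD hab.
Qed.

Lemma passive_conv d (A B : 'M[C]_d) (a b : R) : 0 <= a -> 0 <= b -> a + b = 1 ->
  is_passive A -> is_passive B -> is_passive (a%:C *: A + b%:C *: B).
Proof.
move=> ha hb hab [sA [pA [eA mA]]] [sB [pB [eB mB]]]; split.
  exact: state_conv.
exists (fun i => a * pA i + b * pB i); split.
  rewrite eA eB; apply/matrixP => i j; rewrite !mxE.
  case: eqP => _; rewrite ?mulr1n ?mulr0n ?mulr0 ?addr0 //.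
  by rewrite rmorphD !rmorphM.
move=> i j hij; apply: lerD; apply: ler_wpM2l => //; [exact: mA | exact: mB].
Qed.

Lemma passive_feasible0 d (A : 'M[C]_d) : is_passive A -> ra_feasible A 0.
Proof.
move=> hp; split => //; exists A; split; first by case: hp.
by rewrite addr0 invr1 rmorph0 scale0r addr0 rmorph1 scale1r.
Qed.

Lemma passive_scalar n :
  is_passive (((n.+1)%:R^-1 : R)%:C *: (1%:M : 'M[C]_n.+1)).
Proof.
have hc : 0 <= ((n.+1)%:R^-1 : R) by rewrite invr_ge0 ler0n.
split; first split.
- split; first by rewrite adjmxZ conjR adjmx1.
  move=> v; rewrite -/(qf _ _ _) qfAZ qf1; apply: mulr_ge0; first by rewrite ler0c.
  by apply: sumr_ge0 => i _; rewrite mulrC; apply: mulcJ_ge0.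
- rewrite mxtraceZ mxtrace1 -(rmorph_nat (real_complex R)) -rmorphM mulVf //.
  by rewrite pnatr_eq0.
exists (fun _ => (n.+1)%:R^-1); split => //.
apply/matrixP => i j; rewrite !mxE; case: eqP => _; rewrite ?mulr1n ?mulr0n ?mulr0 ?mulr1 //.
Qed.

Lemma state1_passive (A : 'M[C]_1) : is_state A -> is_passive A.
Proof.
move=> hs; split => //; exists (fun i => complex.Re (A i i)); split; last by move=> i j _; rewrite !ord1.
apply/matrixP => i j; rewrite !mxE !ord1 eqxx mulr1n ge0_realC //.
by apply: psd_diag; case: hs.
Qed.

End Lems3.

Section Lems4.
Variable R : realType.
Local Notation C := (R[i]).

Lemma state_feasible n (A : 'M[C]_n.+1) : is_state A -> ra_feasible A n%:R.
Proof.
case: n A => [|n] A hs.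
  exact: (passive_feasible0 (state1_passive hs)).
split; first by rewrite ler0n.
have hn : ((n.+1)%:R : C) != 0 by rewrite pnatr_eq0.
have hn2 : ((n.+2)%:R : C) != 0 by rewrite pnatr_eq0.
exists (((n.+1)%:R^-1 : R)%:C *: (1%:M - A)); split.
  split; first by apply: psd_scale; [rewrite invr_ge0 ler0n | exact: state_le_id].
  rewrite mxtraceZ raddfB /= mxtrace1; case: hs => _ ->.
  by rewrite fmorphV rmorph_nat -[n.+2%:R]natr1 addrK mulVf.
have -> : ((1 + (n.+1)%:R)^-1)%:C *:
     (A + ((n.+1)%:R)%:C *: (((n.+1)%:R^-1 : R)%:C *: (1%:M - A)))
   = (((n.+2)%:R^-1 : R)%:C *: (1%:M : 'M[C]_n.+2)).
  apply/matrixP => i j; rewrite !mxE !fmorphV !rmorphD !rmorph_nat rmorph1.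
  field.
  by rewrite !nat1r !pnatr_eq0.
exact: passive_scalar.
Qed.

End Lems4.

Section Lems5.
Variable R : realType.
Local Notation C := (R[i]).

Lemma neqC (x : R) : x != 0 -> x%:C != 0 :> C.
Proof. by apply: contra => /eqP h; apply/eqP; apply: complexI; rewrite h. Qed.

Lemma feas_entry d (A S P : 'M[C]_d) t x y : 0 <= t ->
  P = ((1+t)^-1)%:C *: (A + t%:C *: S) -> A x y = (1+t)%:C * P x y - t%:C * S x y.
Proof.
move=> ht ->; rewrite !mxE fmorphV.
have hu : (1 + t)%:C != 0 :> C by apply: neqC; apply: lt0r_neq0; lra.
field; by move: hu; rewrite rmorphD rmorph1.
Qed.

Lemma Edd_lower n t : ra_feasible (delta_mx ord_max ord_max : 'M[C]_n.+1) t -> n%:R <= t.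
Proof.
case=> ht [S [hS hP]].
set P := _ *: _ in hP.
have e := @feas_entry _ _ S P t ord_max ord_max ht erefl.
case: hP => hPs [p [eP mP]].
have eSm := ge0_realC (psd_diag ord_max hS.1).
have s0 : 0 <= complex.Re (S ord_max ord_max) by rewrite -ler0c eSm; exact: psd_diag hS.1.
move: e; rewrite eP !mxE eqxx mulr1n -eSm -!rmorphM -rmorphB => /complexI e.
have htr : \sum_i p i = 1.
  case: hPs => _; rewrite eP mxtrace_diag => h.
  apply: complexI; rewrite rmorph_sum rmorph1 -h; apply: eq_bigr => i _; by rewrite mxE.
have hsum : n.+1%:R * p ord_max <= 1.
  have -> : n.+1%:R * p ord_max = \sum_(i < n.+1) p ord_max.
    by rewrite sumr_const card_ord mulr_natl.
  by rewrite -htr; apply: ler_sum => i _; apply: mP; rewrite -ltnS.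
set s := complex.Re _ in s0 e.
have hN : 0 <= (n%:R : R) by rewrite ler0n.
move: hsum; rewrite -natr1 => hsum.
set q := p ord_max in e hsum.
have h1 : 1 <= (1 + t) * q.
  have : 0 <= t * s by apply: mulr_ge0.
  move: e; rewrite mulrDl mul1r => e; lra.
have h2 : (n%:R + 1) * ((1 + t) * q) <= 1 + t.
  rewrite mulrCA; rewrite -[X in _ <= X]mulr1; apply: ler_wpM2l => //; lra.
have h3 : n%:R + 1 <= (n%:R + 1) * ((1 + t) * q).
  by rewrite ler_peMr //; lra.
lra.
Qed.

Lemma delta_state n : is_state (delta_mx ord_max ord_max : 'M[C]_n.+1).
Proof.
split.
  split; first by rewrite adjmx_delta.
  move=> v.
  have -> : (delta_mx ord_max ord_max : 'M[C]_n.+1) =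
     delta_mx ord_max (0:'I_1) *m delta_mx 0 ord_max by rewrite mul_delta_mx.
  rewrite mulmxA -colE -mulmxA -rowE mxE big_ord1 !mxE mulrC; exact: mulcJ_ge0.
rewrite /mxtrace (bigD1 ord_max) //= big1 ?addr0; first by rewrite mxE eqxx.
by move=> i /negbTE hi; rewrite mxE hi.
Qed.

Lemma feas_ge0 d (A : 'M[C]_d) t : ra_feasible A t -> 0 <= t.
Proof. by case. Qed.

Lemma ra_le d (A : 'M[C]_d) t : ra_feasible A t -> robustness_activity A <= t.
Proof.
move=> h; apply: ge_inf => //; exists 0 => y hy; exact: feas_ge0 hy.
Qed.

Lemma ra_ge d (A : 'M[C]_d) c : (exists t, ra_feasible A t) ->
  (forall t, ra_feasible A t -> c <= t) -> c <= robustness_activity A.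
Proof. by move=> [t ht] h; apply: lb_le_inf; [exists t | move=> y /h]. Qed.

Lemma ra_approx d (A : 'M[C]_d) e : (exists t, ra_feasible A t) -> 0 < e ->
  exists2 t, ra_feasible A t & t < robustness_activity A + e.
Proof.
move=> [t ht] he; apply: inf_lt; first by exists t.
by rewrite ltrDl.
Qed.

End Lems5.

Section Lems6.
Variable R : realType.
Local Notation C := (R[i]).

Lemma feas_unpack d (A : 'M[C]_d) t : ra_feasible A t -> exists S, exists p : 'I_d -> R,
  [/\ 0 <= t, is_state S, (forall i j : 'I_d, (i <= j)%N -> p j <= p i) &
   (forall x y, A x y = (1+t)%:C * (diag_mx (\row_i (p i)%:C)) x y - t%:C * S x y)].
Proof.
case=> ht [S [hS hP]]; set P := _ *: _ in hP.
case: hP => _ [p [eP mP]]; exists S, p; split => // x y.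
by rewrite (@feas_entry _ _ A S P t x y ht erefl) eP.
Qed.

Lemma ra0_passive d (A : 'M[C]_d) : is_state A -> (exists t, ra_feasible A t) ->
  robustness_activity A = 0 -> is_passive A.
Proof.
move=> hs hne h0.
have approx : forall e, 0 < e -> exists2 t, ra_feasible A t & t < e.
  by move=> e he; have := ra_approx hne he; rewrite h0 add0r.
have diagR : forall i, (complex.Re (A i i))%:C = A i i.
  by move=> i; apply: ge0_realC; apply: psd_diag; case: hs.
have hdiag : forall i j : 'I_d, (i <= j)%N -> complex.Re (A j j) <= complex.Re (A i i).
  move=> i j hij; apply/ler_addgt0Pr => e he.
  have [t ht hte] := approx e he.
  have [S [p [t0 hS mP eA]]] := feas_unpack ht.
  have sR : forall k, (complex.Re (S k k))%:C = S k k.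
    by move=> k; apply: ge0_realC; apply: psd_diag; case: hS.
  have s0 : forall k, 0 <= complex.Re (S k k).
    by move=> k; rewrite -ler0c sR; apply: psd_diag; case: hS.
  have s1 : forall k, complex.Re (S k k) <= 1.
    by move=> k; rewrite -(@lecR R) sR; exact: state_diag_le1.
  have eR : forall k, complex.Re (A k k) = (1 + t) * p k - t * complex.Re (S k k).
    move=> k; apply: complexI; rewrite diagR eA !mxE eqxx mulr1n -sR.
    by rewrite rmorphB !rmorphM.
  rewrite !eR.
  have := mP _ _ hij; have := s0 j; have := s1 i.
  move=> a b c.
  have : (1 + t) * p j <= (1 + t) * p i by apply: ler_wpM2l => //; lra.
  have : t * complex.Re (S i i) <= t by rewrite ler_piMr.
  have : 0 <= t * complex.Re (S j j) by apply: mulr_ge0.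
  lra.
have hoff : forall i j : 'I_d, i != j -> A i j = 0.
  move=> i j hij.
  set x := A i j * (A i j)^*.
  have x0 : 0 <= x by apply: mulcJ_ge0.
  suff : complex.Re x <= 0.
    move=> hr; have : x = 0.
      rewrite -(ge0_realC x0); apply/eqP; rewrite -(rmorph0 (real_complex R)) (inj_eq (@complexI R)).
      by rewrite eq_le hr /= -ler0c ge0_realC.
    by move/eqP; rewrite mulf_eq0 => /orP[/eqP //|]; rewrite conjC_eq0 => /eqP.
  apply/ler_addgt0Pr => e he; rewrite add0r.
  have he1 : 0 < Num.min e 1 by rewrite lt_min he ltr01.
  have [t ht hte] := approx _ he1.
  move: hte; rewrite lt_min => /andP[te t1].
  have [S [p [t0 hS mP eA]]] := feas_unpack ht.
  set y := S i j * (S i j)^*.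
  have y0 : 0 <= y by apply: mulcJ_ge0.
  have y1 : complex.Re y <= 1.
    by rewrite -(@lecR R) ge0_realC //; apply: state_offdiag.
  have exy : x = (t * t)%:C * y.
    rewrite /x /y eA !mxE (negbTE hij) mulr0n mulr0 add0r.
    rewrite conjN mulNr mulrN opprK conjM conjR rmorphM; ring.
  have rxy : complex.Re x = t * t * complex.Re y.
    by apply: (@complexI R); rewrite (ge0_realC x0) exy -{1}(ge0_realC y0) -rmorphM.
  rewrite rxy.
  have hy0 : 0 <= complex.Re y by rewrite -ler0c ge0_realC.
  have : t * t * complex.Re y <= t * t by rewrite ler_piMr // mulr_ge0.
  have : t * t <= t * 1 by apply: ler_wpM2l => //; exact: ltW.
  lra.
split => //; exists (fun i => complex.Re (A i i)); split => //.
apply/matrixP => i j; rewrite !mxE; case: eqP => [<-|/eqP hij].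
  by rewrite mulr1n diagR.
by rewrite mulr0n hoff.
Qed.

End Lems6.

Section Lems7.
Variable R : realType.
Local Notation C := (R[i]).

Lemma psd_castE m d (e : d = m) (A : 'M[C]_d) : psd (castmx (e,e) A) <-> psd A.
Proof. by subst m; rewrite castmx_id. Qed.

Lemma ampl1 d (Phi : 'M[C]_d -> 'M[C]_d) (X : 'M[C]_d) (e : d = (1 * d)%N) :
  ampliation Phi (castmx (e,e) X) = castmx (e,e) (Phi X).
Proof.
rewrite /ampliation !big_ord1.
have -> : mxblk (castmx (e,e) X) 0 0 = X.
  apply/matrixP => p q; rewrite mxE castmxE; congr (X _ _); apply: val_inj => /=;
  by rewrite mul0n add0n.
apply/matrixP => x y.
case: (mxtens_indexP x) => a p; case: (mxtens_indexP y) => b q.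
rewrite tensmxE castmxE [a]ord1 [b]ord1 mxE eqxx mul1r; congr (Phi X _ _); apply: val_inj => /=;
by rewrite mul0n add0n.
Qed.

Lemma channel_state d (Phi : {linear 'M[C]_d -> 'M[C]_d}) (S : 'M[C]_d) :
  is_channel Phi -> is_state S -> is_state (Phi S).
Proof.
move=> [hcp htp] [hS tS]; split; last by rewrite htp.
have e : d = (1 * d)%N by rewrite mul1n.
apply/(psd_castE e); rewrite -ampl1; apply: hcp; exact/psd_castE.
Qed.

Lemma feasible_channel d (Phi : {linear 'M[C]_d -> 'M[C]_d}) (A : 'M[C]_d) t :
  is_channel Phi -> passivity_preserving Phi -> ra_feasible A t -> ra_feasible (Phi A) t.
Proof.
move=> hc hpp [ht [S [hS hP]]]; split => //; exists (Phi S); split.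
  exact: channel_state.
by rewrite -linearZ -linearD -linearZ; apply: hpp.
Qed.

Lemma feasible_conv d (A1 A2 : 'M[C]_d) (p t1 t2 : R) : 0 <= p <= 1 ->
  ra_feasible A1 t1 -> ra_feasible A2 t2 ->
  ra_feasible (p%:C *: A1 + (1 - p)%:C *: A2) (p * t1 + (1 - p) * t2).
Proof.
move=> /andP[p0 p1] [h1 [S1 [hS1 hP1]]] [h2 [S2 [hS2 hP2]]].
set t := p * t1 + (1 - p) * t2.
have q0 : 0 <= 1 - p by lra.
have u0 : 0 <= p * t1 by apply: mulr_ge0.
have w0 : 0 <= (1 - p) * t2 by apply: mulr_ge0.
have ht : 0 <= t by rewrite /t; lra.
split => //.
set P1 := _ *: _ in hP1; set P2 := _ *: _ in hP2.
pose S := if t == 0 then S1 else ((p * t1) / t)%:C *: S1 + (((1 - p) * t2) / t)%:C *: S2.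
have eS : t%:C *: S = (p * t1)%:C *: S1 + ((1 - p) * t2)%:C *: S2.
  rewrite /S; case: eqP => [t0|/eqP tn0].
    have a0 : p * t1 = 0 by move: t0; rewrite /t; lra.
    have b0 : (1 - p) * t2 = 0 by move: t0; rewrite /t; lra.
    by rewrite t0 a0 b0 rmorph0 !scale0r addr0.
  rewrite scalerDr !scalerA -!rmorphM; congr (_%:C *: _ + _%:C *: _); field => //.
exists S; split.
  rewrite /S; case: eqP => // /eqP tn0; apply: state_conv => //.
  - by apply: divr_ge0.
  - by apply: divr_ge0.
  - by rewrite -mulrDl divff.
have hu : 1 + t != 0 by apply: lt0r_neq0; lra.
have hu1 : 1 + t1 != 0 by apply: lt0r_neq0; lra.
have hu2 : 1 + t2 != 0 by apply: lt0r_neq0; lra.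
have -> : ((1 + t)^-1)%:C *: (p%:C *: A1 + (1 - p)%:C *: A2 + t%:C *: S) =
   ((p * (1 + t1)) / (1 + t))%:C *: P1 + (((1 - p) * (1 + t2)) / (1 + t))%:C *: P2.
  rewrite eS /P1 /P2 !scalerDr !scalerA -!rmorphM [RHS]addrACA.
  have E1 : (1 + t)^-1 * p = p * (1 + t1) / (1 + t) / (1 + t1).
    by field; rewrite hu1 hu.
  have E2 : (1 + t)^-1 * (1 - p) = (1 - p) * (1 + t2) / (1 + t) / (1 + t2).
    by field; rewrite hu2 hu.
  have E3 : (1 + t)^-1 * (p * t1) = p * (1 + t1) / (1 + t) / (1 + t1) * t1.
    by field; rewrite hu1 hu.
  have E4 : (1 + t)^-1 * ((1 - p) * t2) = (1 - p) * (1 + t2) / (1 + t) / (1 + t2) * t2.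
    by field; rewrite hu2 hu.
  by rewrite E1 E2 E3 E4.
apply: passive_conv => //.
- by apply: divr_ge0; [apply: mulr_ge0 | ]; lra.
- by apply: divr_ge0; [apply: mulr_ge0 | ]; lra.
- rewrite -mulrDl; apply: (mulIf hu); rewrite mulfVK // mul1r /t; ring.
Qed.

End Lems7.


Unset Implicit Arguments.
Set Strict Implicit.

(* The system has dimension d = n.+1; basis index i : 'I_n.+1 corresponds to
   |i+1> in the paper, so |d> is ord_max and d - 1 = n. *)
Theorem mainTheorem9 (R : realType) (n : nat) (E : 'I_n.+1 -> R)
    (hE : forall i j : 'I_n.+1, (i < j)%N -> E i < E j) :
  (* (1) range, and the maximum value d-1 is attained at |d><d| *)
  ((forall rho : 'M[R[i]]_n.+1, is_state rho ->
      0 <= robustness_activity rho <= n%:R) /\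
   is_state (delta_mx ord_max ord_max : 'M[R[i]]_n.+1) /\
   robustness_activity (delta_mx ord_max ord_max : 'M[R[i]]_n.+1) = n%:R) /\
  (* (2) faithfulness *)
  (forall rho : 'M[R[i]]_n.+1, is_state rho ->
      (robustness_activity rho = 0 <-> is_passive rho)) /\
  (* (3) convexity *)
  (forall (p : R) (rho1 rho2 : 'M[R[i]]_n.+1),
      0 <= p <= 1 -> is_state rho1 -> is_state rho2 ->
      robustness_activity (p%:C *: rho1 + (1 - p)%:C *: rho2)
        <= p * robustness_activity rho1 + (1 - p) * robustness_activity rho2) /\
  (* (4) monotonicity under passivity-preserving channels *)
  (forall (Phi : {linear 'M[R[i]]_n.+1 -> 'M[R[i]]_n.+1}) (rho : 'M[R[i]]_n.+1),
      is_channel Phi -> passivity_preserving Phi -> is_state rho ->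
      robustness_activity (Phi rho) <= robustness_activity rho).
Proof.
have hne : forall rho : 'M[R[i]]_n.+1, is_state rho -> exists t, ra_feasible rho t.
  by move=> rho h; exists n%:R; exact: state_feasible.
have part1 : forall rho : 'M[R[i]]_n.+1, is_state rho ->
    0 <= robustness_activity rho <= n%:R.
  move=> rho h; apply/andP; split.
  - by apply: ra_ge (hne _ h) _ => t; exact: feas_ge0.
  - exact: ra_le (state_feasible h).
split; [split; [exact: part1 | split; [exact: delta_state | ]] | ].
  apply/eqP; rewrite eq_le; apply/andP; split.
    by case/andP: (part1 _ (delta_state _ n)).
  by apply: ra_ge; [exact: hne (delta_state _ n) | move=> t; exact: Edd_lower].
split.
  move=> rho h; split; first by apply: ra0_passive => //; exact: hne.
  move=> hp; apply/eqP; rewrite eq_le; apply/andP; split.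
    exact: ra_le (passive_feasible0 hp).
  by case/andP: (part1 _ h).
split.
  move=> p rho1 rho2 hp h1 h2.
  apply/ler_addgt0Pr => e he.
  have [t1 f1 l1] := ra_approx (hne _ h1) he.
  have [t2 f2 l2] := ra_approx (hne _ h2) he.
  apply: le_trans (ra_le (feasible_conv hp f1 f2)) _.
  case/andP: hp => p0 p1.
  have q1 : p * t1 <= p * (robustness_activity rho1 + e) by apply: ler_wpM2l => //; exact: ltW.
  have q2 : (1 - p) * t2 <= (1 - p) * (robustness_activity rho2 + e).
    by apply: ler_wpM2l; [lra | exact: ltW].
  move: q1 q2; rewrite !mulrDr; lra.
move=> Phi rho hc hpp h.
apply: ra_ge (hne _ h) _ => t ht; exact: ra_le (feasible_channel hc hpp ht).
Qed.
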